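(* For every integer $n\ge 1$, the pentagonal stacked prism $Y_{5,n}$ is odd prime.
   Context: All graphs are finite and simple. A graph $G$ of order $N$ is odd prime if there is a bijection $\ell:V(G)\to\{1,3,\ldots,2N-1\}$ with $\gcd(\ell(u),\ell(v))=1$ for every edge $uv$. For $k\ge 3$, $n\ge 1$, the stacked prism $Y_{k,n}$ is the Cartesian product $C_k\,\square\,P_n$ of a $k$-cycle and a path on $n$ vertices: vertices $v_{i,j}$ ($1\le i\le n$, $1\le j\le k$), with edges $v_{i,j}v_{i,j+1}$ ($1\le j\le k-1$), $v_{i,k}v_{i,1}$ for each $i$, and $v_{i,j}v_{i+1,j}$ for $1\le i\le n-1$, $1\le j\le k$. *)

(* Defs.v *)
From mathcomp Require Import all_boot.
Set Implicit Arguments. Unset Strict Implicit. Unset Printing Implicit Defensive.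

Definition simple_graph (T : finType) (e : rel T) : Prop :=
  symmetric e /\ irreflexive e.

(* The label set {1,3,...,2N-1} with N = #|T| is encoded as 'I_#|T|, the index
   i standing for the odd number 2*i+1. *)
Definition odd_label (N : nat) (i : 'I_N) : nat := (2 * i).+1.

Definition odd_prime (T : finType) (e : rel T) : Prop :=
  exists l : T -> 'I_#|T|, bijective l /\
    forall u v, e u v -> coprime (odd_label (l u)) (odd_label (l v)).

(* Stacked prism Y_{k,n} = C_k [] P_n. Vertex v_{i,j} (1<=i<=n, 1<=j<=k) is
   encoded as (i-1, j-1) : 'I_n * 'I_k. *)
Definition prism_adj (k n : nat) (x y : 'I_n * 'I_k) : bool :=
  let (i1, j1) := x in let (i2, j2) := y in
  ((nat_of_ord i1 == i2) &&
     ((j2 == (j1.+1 %% k) :> nat) || (j1 == (j2.+1 %% k) :> nat)))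
  || ((nat_of_ord j1 == j2) && ((i2 == i1.+1 :> nat) || (i1 == i2.+1 :> nat))).

(* Main.v *)
Require Import Defs.
From mathcomp Require Import all_boot.
From mathcomp Require Import zify.

Definition pw (m : nat) : bool := m \in [:: 1; 2; 4; 8].

Lemma key x c d : (pw (d - c) && (c <= d)) || (pw (c - d) && (d <= c)) ->
  coprime (2 * (5 * x + c)).+1 (2 * (5 * x + d)).+1.
Proof.
have K : forall c d, pw (d - c) -> c <= d ->
    coprime (2 * (5 * x + c)).+1 (2 * (5 * x + d)).+1.
  move=> c' d' hp hle.
  have [k hk] : exists k, d' - c' = 2 ^ k.
    move: hp; rewrite /pw !inE => /or4P [] /eqP ->;
      [exists 0 | exists 1 | exists 2 | exists 3]; by [].
  have -> : (2 * (5 * x + d')).+1 = 2 ^ k.+1 + (2 * (5 * x + c')).+1.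
    rewrite expnS -hk; lia.
  rewrite /coprime gcdnDr -/(coprime _ _) coprime_pexpr // coprimen2.
  by rewrite /= oddM.
by case/orP => /andP [] h1 h2; [apply: K | rewrite coprime_sym; apply: K].
Qed.

Definition b (k : nat) : nat := nth 0 [:: 0; 1; 3; 4; 2] (k %% 5).

Lemma b_lt k : b k < 5.
Proof.
rewrite /b; have := ltn_pmod k (isT : 0 < 5).
by case: (k %% 5) => [|[|[|[|[|]]]]].
Qed.

Lemma b_inj k k' : b k = b k' -> k %% 5 = k' %% 5.
Proof.
rewrite /b; have := ltn_pmod k (isT : 0 < 5); have := ltn_pmod k' (isT : 0 < 5).
by case: (k %% 5) => [|[|[|[|[|]]]]]; case: (k' %% 5) => [|[|[|[|[|]]]]].
Qed.

Lemma b_mod k : b k = b (k %% 5).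
Proof. by rewrite /b modn_mod. Qed.

Definition lab (i j : nat) : nat := (2 * (5 * i + b (j + 2 * i))).+1.

Lemma labH i j : j < 5 -> coprime (lab i j) (lab i ((j + 1) %% 5)).
Proof.
move=> hj; rewrite /lab.
have -> : b (j + 2 * i) = b (j + 2 * (i %% 5)).
  by rewrite b_mod [in RHS]b_mod; congr b; lia.
have -> : b ((j + 1) %% 5 + 2 * i) = b (j + 1 + 2 * (i %% 5)).
  by rewrite b_mod [in RHS]b_mod; congr b; lia.
have := ltn_pmod i (isT : 0 < 5).
case: (i %% 5) => [|[|[|[|[|]]]]] // _;
move: hj; case: j => [|[|[|[|[|]]]]] // _; apply: key; by [].
Qed.

Lemma labV i j : j < 5 -> coprime (lab i j) (lab i.+1 j).
Proof.
move=> hj; rewrite /lab.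
have -> : b (j + 2 * i) = b (j + 2 * (i %% 5)).
  by rewrite b_mod [in RHS]b_mod; congr b; lia.
have -> : b (j + 2 * i.+1) = b (j + 2 + 2 * (i %% 5)).
  by rewrite b_mod [in RHS]b_mod; congr b; lia.
have -> : 5 * i.+1 = 5 * i + 5 by lia.
rewrite -addnA.
have := ltn_pmod i (isT : 0 < 5).
case: (i %% 5) => [|[|[|[|[|]]]]] // _;
move: hj; case: j => [|[|[|[|[|]]]]] // _; apply: key; by [].
Qed.

Theorem theorem3p7 (n : nat) : 1 <= n -> odd_prime (@prism_adj 5 n).
Proof.
move=> _.
have lt : forall x : 'I_n * 'I_5, 5 * x.1 + b (x.2 + 2 * x.1) < #|{: 'I_n * 'I_5}|.
  move=> [i j] /=; rewrite card_prod !card_ord.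
  have := b_lt (j + 2 * i); have := ltn_ord i; lia.
exists (fun x => Ordinal (lt x)); split.
  apply: inj_card_bij; last by rewrite card_ord.
  move=> [i j] [i' j'] /= /(congr1 val) /= E.
  have Ei : (i : nat) = i'.
    have := b_lt (j + 2 * i); have := b_lt (j' + 2 * i'); lia.
  have Ei' : i = i' by apply: val_inj.
  subst i'.
  have : (j + 2 * i) %% 5 = (j' + 2 * i) %% 5 by apply: b_inj; lia.
  move/eqP; rewrite eqn_modDr => /eqP.
  rewrite !modn_small // => Ej.
  by congr pair; apply: val_inj.
move=> [i1 j1] [i2 j2]; rewrite /prism_adj /odd_label /=.
rewrite -!/(lab _ _).
case/orP => /andP [/eqP E /orP [] /eqP F].
- by rewrite -E F -(addn1 j1); apply: labH.
- by rewrite coprime_sym -E F -(addn1 j2); apply: labH.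
- by rewrite F -E; apply: labV.
- by rewrite coprime_sym F -E; apply: labV.
Qed.
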